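(* Let $G$ be a simple undirected graph with adjacency matrix $A$, and let $0<\tau<\tau_c^{(1)}(G)$, so that $R_0(G,\tau)=\tau\lambda_1(A)<1$. Then for every initial condition $V(0)\in[0,1]^N$ and every $t\ge 0$, $$y(t;G,\tau,V(0)) \le y(t;G,\tau,u) \le e^{(R_0(G,\tau)-1)t}.$$ Consequently, for every $r\in(0,1)$, the upper-transition time satisfies $$\overline{T}(r)\le \frac{1}{1-R_0(G,\tau)}\log\left(\frac1r\right).$$
   Context: NIMFA SIS process (time rescaled so that the curing rate is $1$): for a simple undirected graph with $N\times N$ symmetric $0/1$ adjacency matrix $A$ (zero diagonal) and effective infection rate $\tau>0$, the infection probabilities $v_i(t)\in[0,1]$ evolve by $\frac{dv_i}{dt} = -v_i + \tau(1-v_i)\sum_{j=1}^N a_{ij}v_j$, $i=1,\dots,N$, with initial condition $V(0)\in[0,1]^N$. $y(t;G,\tau,V(0))=\frac1N\sum_i v_i(t)$ denotes the prevalence of this process. $u$ is the all-one vector. $\lambda_1(A)$ is the largest eigenvalue of $A$, $\tau_c^{(1)}(G)=1/\lambda_1(A)$, and $R_0(G,\tau)=\tau\lambda_1(A)$. When $\tau\le\tau_c^{(1)}(G)$ the steady-state prevalence is $y_\infty=0$. The upper-transition time is $\overline{T}(r)=\min\{t\ge 0: |y(t;G,\tau,V(0))-y_\infty|\le r \text{ for all } V(0) \text{ with } v_i(0)\in[r,1]\ \forall i\}$. *)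

(* Defs.v *)
From HB Require Import structures.
From mathcomp Require Import all_boot all_order all_algebra.
From mathcomp Require Import all_classical all_reals all_analysis.
Set Implicit Arguments. Unset Strict Implicit. Unset Printing Implicit Defensive.
Import Order.TTheory GRing.Theory Num.Theory.
Import numFieldNormedType.Exports.
Local Open Scope classical_set_scope.
Local Open Scope ring_scope.

Definition simple_adjacency (R : realType) (N : nat) (A : 'M[R]_N) : Prop :=
  [/\ forall i j, A i j = A j i,
      forall i, A i i = 0 &
      forall i j, A i j = 0 \/ A i j = 1].

Definition largest_eigenvalue (R : realType) (N : nat) (A : 'M[R]_N) (lam : R)
  : Prop :=
  eigenvalue A lam /\ (forall a, eigenvalue A a -> a <= lam).

Definition nimfa_solution (R : realType) (N : nat) (A : 'M[R]_N) (tau : R)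
  (v : R -> 'I_N -> R) : Prop :=
  (forall i : 'I_N, (fun s : R => v s i) x @[x --> (0:R)^'+] --> v 0 i) /\
  (forall (i : 'I_N) (t : R), 0 < t ->
     is_derive t (1 : R) (fun s : R => v s i)
       (- v t i + tau * (1 - v t i) * \sum_(j < N) A i j * v t j)).

Definition prevalence (R : realType) (N : nat) (v : R -> 'I_N -> R) (t : R) : R :=
  (\sum_(i < N) v t i) / N%:R.

(* Main.v *)
Require Import Defs.
From HB Require Import structures.
From mathcomp Require Import all_boot all_order all_algebra.
From mathcomp Require Import all_classical all_reals all_analysis.
From mathcomp Require Import complex sesquilinear spectral.
From mathcomp Require Import ring lra.
Import Order.TTheory GRing.Theory Num.Theory.
Import numFieldNormedType.Exports.
Local Open Scope classical_set_scope.
Local Open Scope ring_scope.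
Lemma is_derive_expNK (R : realType) (K s : R) :
  is_derive s 1 (fun u : R => expR (- (K * u))) (expR (- (K * s)) * (- K)).
Proof.
have h1 : is_derive s 1 (fun u : R => - (K * u)) (- K).
  have := @is_deriveN R R^o R^o (K *: id) s 1 (K *: 1) (is_deriveZ K (is_derive_id s (1:R))).
  by rewrite /GRing.scale /= mulr1.
exact: (@is_derive1_comp R expR (fun u => - (K * u)) s _ _ _ h1).
Qed.

Lemma gronwall (R : realType) (f df : R -> R) (K T : R) :
  f x @[x --> (0:R)^'+] --> f 0 ->
  (forall t : R, 0 < t -> is_derive t 1 f (df t)) ->
  (forall t : R, 0 < t < T -> df t <= K * f t) ->
  forall t : R, 0 <= t <= T -> f t <= f 0 * expR (K * t).
Proof.
move=> f0 fd fle t /andP[t0 tT].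
pose g s := f s * expR (- (K * s)).
have gd : forall s : R, 0 < s -> is_derive s 1 g (df s * expR (- (K * s)) + f s * (expR (- (K * s)) * (- K))).
  move=> s s0; rewrite /g.
  have := is_deriveM (fd s s0) (@is_derive_expNK R K s).
  move=> h; apply: is_derive_eq h _; rewrite /GRing.scale /=; ring.
have gc' : {within `[0, +oo[, continuous g}.
  apply/continuous_within_itvcyP; split.
    move=> u; rewrite in_itv /= andbT => u0.
    have := gd u u0 => -[dg _].
    exact/differentiable_continuous/derivable1_diffP.
  apply: cvgM => //.
  have [d _] := @is_derive_expNK R K 0.
  have c := differentiable_continuous (proj1 (derivable1_diffP _ _) d).
  exact: cvg_within_filter c.
have gc : {within `[0, T], continuous g}.
  apply: continuous_subspaceW gc'.
  by move=> u /=; rewrite !in_itv /= => /andP[-> _].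
have gle : g t <= g 0.
  apply: (@ler0_derive1_nincr R g 0 T) => //.
  - move=> u; rewrite in_itv /= => /andP[u0 _]; by have [] := gd u u0.
  - move=> u; rewrite in_itv /= => /andP[u0 uT].
    rewrite derive1E; have [_ ->] := gd u u0.
    have e0 : 0 < expR (- (K * u)) := expR_gt0 _.
    have := fle u; rewrite u0 uT => /(_ isT) h.
    have -> : df u * expR (- (K * u)) + f u * (expR (- (K * u)) * - K) =
      expR (- (K * u)) * (df u - K * f u) by ring.
    by apply: mulr_ge0_le0; [exact: ltW | rewrite subr_le0].
have -> : f t = g t * expR (K * t).
  by rewrite /g -mulrA -expRD addNr expR0 mulr1.
move: gle; rewrite /g mulr0 oppr0 expR0 mulr1 => gle.
by apply: ler_wpM2r => //; exact: ltW (expR_gt0 _).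
Qed.
Definition mneg {R : realType} (s : R) : R := if s < 0 then s else 0.

Lemma mneg_derive (R : realType) (s : R) :
  is_derive s 1 (fun u : R => mneg u ^+ 2) (2 * mneg s).
Proof.
have [s0|s0|->] := ltgtP s 0.
- have H : is_derive s 1 (fun u : R => u ^+ 2) (2 * s).
    have := is_deriveX 2 (is_derive_id s (1:R)).
    move=> h; apply: is_derive_eq h _; rewrite /GRing.scale /=; ring.
  rewrite /mneg s0; apply: near_eq_is_derive H.
  near=> u; rewrite /mneg ifT //.
  near: u; exact: (lt_nbhsl s0).
- have H : is_derive s 1 (fun u : R => 0 : R) 0 by exact: is_derive_cst.
  rewrite /mneg ltNge (ltW s0) /= mulr0; apply: near_eq_is_derive H.
  near=> u; rewrite /mneg ltNge ifF ?expr0n //.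
  apply/negbF; apply: ltW; near: u; exact: (lt_nbhsr s0).
- have -> : 2 * mneg (0:R) = 0 by rewrite /mneg ltxx mulr0.
  suff q0 : (fun h : R => h^-1 *: (((fun u : R => mneg u ^+ 2) \o shift 0) (h *: 1)
      - mneg 0 ^+ 2)) @ (0:R)^' --> (0:R).
    by split; [apply/cvg_ex; exists 0 | exact: cvg_lim].
  apply/cvgrPdist_lt => e e0; near=> h.
  rewrite /= sub0r normrN addr0 /GRing.scale /= mulr1 {2}/mneg ltxx expr0n subr0.
  have [h0|h0] := ltP h 0.
    rewrite /mneg h0 expr2 mulrA mulVf ?lt_eqF // mul1r.
    near: h; exact: dnbhs0_lt.
  by rewrite /mneg (ltNge h 0) h0 /= expr0n mulr0 normr0.
Unshelve. all: by end_near.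
Qed.

Lemma nonneg_inv (R : realType) (N : nat) (x dx : R -> 'I_N -> R) (K T : R) :
  (forall i, (fun s => x s i) y @[y --> (0:R)^'+] --> x 0 i) ->
  (forall i (t : R), 0 < t -> is_derive t 1 (fun s => x s i) (dx t i)) ->
  (forall i, 0 <= x 0 i) ->
  (forall t : R, 0 < t < T ->
     \sum_i mneg (x t i) * dx t i <= K * \sum_i mneg (x t i) ^+ 2) ->
  forall t : R, 0 <= t <= T -> forall i, 0 <= x t i.
Proof.
move=> xc xd x0 hK t tT.
pose Phi s := \sum_i mneg (x s i) ^+ 2.
pose dPhi s := \sum_i 2 * mneg (x s i) * dx s i.
have Pd : forall s : R, 0 < s -> is_derive s 1 Phi (dPhi s).
  move=> s s0.
  have -> : Phi = \sum_i ((fun u : R => mneg u ^+ 2) \o (fun s => x s i)).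
    by apply/funext => u; rewrite /Phi fct_sumE.
  apply: is_derive_sum => i.
  exact: (is_derive1_comp (@mneg_derive R (x s i)) (xd i s s0)).
have Pc : Phi y @[y --> (0:R)^'+] --> Phi 0.
  apply: cvg_big => // [|i _]; first exact: add_continuous.
  apply: (@continuous_cvg _ _ _ _ _ (fun s => x s i) (fun u : R => mneg u ^+ 2)) => //.
  have [d _] := @mneg_derive R (x 0 i).
  exact/differentiable_continuous/derivable1_diffP.
have Pg : forall t : R, 0 <= t <= T -> Phi t <= Phi 0 * expR (2 * K * t).
  apply: gronwall Pc Pd _ => u uT.
  rewrite /dPhi /Phi; under eq_bigr do rewrite -mulrA.
  by rewrite -mulr_sumr -mulrA ler_pM2l // hK.
have P0 : Phi 0 = 0.
  by apply: big1 => i _; rewrite /mneg ltNge x0 /= expr0n.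
have := Pg t tT; rewrite P0 mul0r => Ple.
have Pge : 0 <= Phi t by apply: sumr_ge0 => i _; exact: sqr_ge0.
have Pt0 : Phi t = 0 by apply/eqP; rewrite eq_le Ple Pge.
move=> i; have /psumr_eq0P := Pt0 => /(_ (fun j _ => sqr_ge0 _) i isT).
rewrite /mneg; case: ltP => // xi /eqP; rewrite sqrf_eq0 => /eqP xi0.
by move: xi; rewrite xi0 ltxx.
Qed.
Lemma bounded_on (R : realType) (N : nat) (x : R -> 'I_N -> R) (T : R) :
  (forall i, (fun s => x s i) y @[y --> (0:R)^'+] --> x 0 i) ->
  (forall i (t : R), 0 < t -> derivable (fun s => x s i) t 1) ->
  0 <= T -> exists M, forall t : R, 0 <= t <= T -> forall j, `|x t j| <= M.
Proof.
move=> xc xd T0.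
pose f s := \sum_j `|x s j|.
have fc : {within `[0, +oo[, continuous f}.
  apply/continuous_within_itvcyP; split.
    move=> u; rewrite in_itv /= andbT => u0.
    apply: cvg_big => // [|j _]; first exact: add_continuous.
    apply: (@continuous_cvg _ _ _ _ _ (fun s => x s j) (@Num.norm _ R)).
      exact: norm_continuous.
    exact/differentiable_continuous/derivable1_diffP/xd.
  apply: cvg_big => // [|j _]; first exact: add_continuous.
  apply: (@continuous_cvg _ _ _ _ _ (fun s => x s j) (@Num.norm _ R)) => //.
  exact: norm_continuous.
have fcT : {within `[0, T], continuous f}.
  apply: continuous_subspaceW fc.
  by move=> u /=; rewrite !in_itv /= => /andP[-> _].
have [c _ hc] := EVT_max T0 fcT.
exists (f c) => t tT j.
apply: le_trans (hc t _); last by rewrite in_itv.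
rewrite /f (bigD1 j) //= lerDl.
by apply: sumr_ge0 => k _.
Qed.
Lemma dsum_bound (R : realType) (N : nat) (c : 'I_N -> 'I_N -> R) (m : 'I_N -> R) :
  (forall i j, c i j * (m i * m j) <= (m i ^+ 2 + m j ^+ 2) / 2) ->
  \sum_i \sum_j c i j * (m i * m j) <= N%:R * \sum_i m i ^+ 2.
Proof.
move=> h.
apply: le_trans (_ : \sum_i \sum_j (m i ^+ 2 + m j ^+ 2) / 2 <= _).
  by apply: ler_sum => i _; apply: ler_sum => j _; exact: h.
rewrite le_eqVlt; apply/orP; left; apply/eqP.
under eq_bigr do rewrite -mulr_suml big_split /= sumr_const card_ord.
rewrite -mulr_suml big_split /= sumr_const card_ord.
rewrite sumrMnl.
set S := \sum_i _.
rewrite -mulr_natl.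
rewrite -mulr2n -[S *+ N *+ 2]mulr_natl -[S *+ N]mulr_natl; field; by [].
Qed.

Lemma cauchy_schwarz (R : realType) (N : nat) (x : 'I_N -> R) :
  (\sum_i x i) ^+ 2 <= N%:R * \sum_i x i ^+ 2.
Proof.
have -> : (\sum_i x i) ^+ 2 = \sum_i \sum_j 1 * (x i * x j).
  rewrite expr2 mulr_suml; apply: eq_bigr => i _; rewrite mulr_sumr.
  by apply: eq_bigr => j _; rewrite mul1r.
apply: dsum_bound => i j; rewrite mul1r.
have : 0 <= (x i - x j) ^+ 2 := sqr_ge0 _.
move=> h.
have -> : (x i ^+ 2 + x j ^+ 2) / 2 = x i * x j + (x i - x j) ^+ 2 / 2.
  by rewrite sqrrB; field.
by rewrite lerDl divr_ge0.
Qed.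
Lemma amgm01 (R : realType) (a p q : R) : (a = 0 \/ a = 1) ->
  a * (p * q) <= (p ^+ 2 + q ^+ 2) / 2.
Proof.
have h : p * q <= (p ^+ 2 + q ^+ 2) / 2.
  have -> : (p ^+ 2 + q ^+ 2) / 2 = p * q + (p - q) ^+ 2 / 2.
    by rewrite sqrrB; field.
  by rewrite lerDl divr_ge0 ?sqr_ge0.
case=> ->; rewrite ?mul1r //.
by rewrite mul0r divr_ge0 // addr_ge0 // sqr_ge0.
Qed.

Lemma sum_abs_bound (R : realType) (N : nat) (A : 'M[R]_N) (y : 'I_N -> R) (M : R) i :
  (forall i j, A i j = 0 \/ A i j = 1) -> (forall j, `|y j| <= M) ->
  `|\sum_j A i j * y j| <= N%:R * M.
Proof.
move=> A01 hy.
apply: le_trans (ler_norm_sum _ _ _) _.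
apply: le_trans (_ : \sum_(j < N) M <= _); last by rewrite sumr_const card_ord mulr_natl.
apply: ler_sum => j _; rewrite normrM.
by case: (A01 i j) => ->; rewrite ?normr0 ?mul0r ?normr1 ?mul1r //; apply: le_trans (hy j).
Qed.

Lemma mneg_le (R : realType) (s : R) : mneg s <= s.
Proof. by rewrite /mneg; case: ltP. Qed.
Lemma mneg_le0 (R : realType) (s : R) : mneg s <= 0.
Proof. by rewrite /mneg; case: ltP => // /ltW. Qed.

Lemma sol_nonneg (R : realType) (N : nat) (A : 'M[R]_N) (tau : R) (v : R -> 'I_N -> R) :
  simple_adjacency A -> 0 <= tau -> nimfa_solution A tau v ->
  (forall i, 0 <= v 0 i) -> forall t : R, 0 <= t -> forall i, 0 <= v t i.
Proof.
move=> [Asym Adiag A01] tau0 [vc vd] v0 t t0.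
have xd : forall i (s : R), 0 < s -> derivable (fun u => v u i) s 1.
  by move=> i s s0; have [] := vd i s s0.
have T0 : 0 <= t + 1 by rewrite addr_ge0.
have [M hM] := @bounded_on R N v (t + 1) vc xd T0.
apply: (@nonneg_inv R N v _ (tau * N%:R * M + tau * N%:R) (t + 1) vc vd v0); last first.
  by rewrite t0 /= lerDl ler01.
move=> u /andP[u0 uT].
have hMu : forall j, `|v u j| <= M by apply: hM; rewrite (ltW u0) ltW.
set S := \sum_i mneg (v u i) ^+ 2.
have step1 : forall i, mneg (v u i) * (- v u i + tau * (1 - v u i) * \sum_j A i j * v u j)
   <= tau * N%:R * M * mneg (v u i) ^+ 2 + tau * \sum_j A i j * (mneg (v u i) * mneg (v u j)).
  move=> i; have [vi|vi] := ltP (v u i) 0; last first.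
    have mi : mneg (v u i) = 0 by rewrite /mneg (ltNge (v u i) 0) vi.
    rewrite mi mul0r expr0n /= mulr0 add0r big1 ?mulr0 // => j _.
    by rewrite mul0r mulr0.
  have mi : mneg (v u i) = v u i by rewrite /mneg vi.
  rewrite mi.
  set s := \sum_j A i j * v u j.
  have hs := @sum_abs_bound R N A (v u) M i A01 hMu; rewrite -/s in hs.
  have F2 : v u i * s <= \sum_j A i j * (v u i * mneg (v u j)).
    rewrite /s mulr_sumr; apply: ler_sum => j _.
    rewrite mulrCA; apply: ler_wpM2l.
      by case: (A01 i j) => ->.
    by rewrite ler_wnM2l ?mneg_le // ltW.
  have F3 : - s <= N%:R * M by apply: le_trans (ler_norm _) _; rewrite normrN.
  have -> : v u i * (- v u i + tau * (1 - v u i) * s) =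
     - v u i ^+ 2 + tau * (v u i * s) + tau * (v u i ^+ 2 * (- s)) by ring.
  rewrite addrC; apply: lerD.
    have -> : tau * N%:R * M * v u i ^+ 2 = tau * (v u i ^+ 2 * (N%:R * M)) by ring.
    by apply: ler_wpM2l => //; apply: ler_wpM2l => //; exact: sqr_ge0.
  by rewrite -[X in _ <= X]add0r; apply: lerD; [rewrite oppr_le0 sqr_ge0 | apply: ler_wpM2l].
have step2 : \sum_i \sum_j A i j * (mneg (v u i) * mneg (v u j)) <= N%:R * S.
  by apply: dsum_bound => i j; exact: amgm01.
apply: le_trans (ler_sum _ (fun i _ => step1 i)) _.
rewrite big_split /= -!mulr_sumr.
rewrite mulrDl; apply: lerD => //.
by rewrite -mulrA; apply: ler_wpM2l.
Qed.
Lemma sol_le1 (R : realType) (N : nat) (A : 'M[R]_N) (tau : R) (v : R -> 'I_N -> R) :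
  simple_adjacency A -> 0 <= tau -> nimfa_solution A tau v ->
  (forall i, v 0 i <= 1) -> forall t : R, 0 <= t -> forall i, v t i <= 1.
Proof.
move=> [Asym Adiag A01] tau0 [vc vd] v1 t t0.
have xd : forall i (s : R), 0 < s -> derivable (fun u => v u i) s 1.
  by move=> i s s0; have [] := vd i s s0.
have T0 : 0 <= t + 1 by rewrite addr_ge0.
have [M hM] := @bounded_on R N v (t + 1) vc xd T0.
have zc : forall i, (fun s => 1 - v s i) y @[y --> (0:R)^'+] --> 1 - v 0 i.
  by move=> i; apply: cvgB => //; exact: cvg_cst.
have zd : forall i (s : R), 0 < s -> is_derive s 1 (fun u => 1 - v u i)
    (- (- v s i + tau * (1 - v s i) * \sum_(j < N) A i j * v s j)).
  move=> i s s0; have := is_deriveB (@is_derive_cst R R^o R^o 1 s 1) (vd i s s0).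
  by move=> h; apply: is_derive_eq h _; rewrite sub0r.
move=> i; rewrite -subr_ge0.
apply: (@nonneg_inv R N (fun s i => 1 - v s i) _ (tau * N%:R * M) (t + 1) zc zd) => //.
- by move=> j; rewrite subr_ge0.
- move=> u /andP[u0 uT].
  have hMu : forall j, `|v u j| <= M by apply: hM; rewrite (ltW u0) ltW.
  rewrite mulr_sumr; apply: ler_sum => k _.
  have [zk|zk] := ltP (1 - v u k) 0; last first.
    have mk : mneg (1 - v u k) = 0 by rewrite /mneg (ltNge (1 - v u k) 0) zk.
    by rewrite mk mul0r expr0n /= mulr0.
  have mk : mneg (1 - v u k) = 1 - v u k by rewrite /mneg zk.
  rewrite mk.
  set s := \sum_j A k j * v u j.
  have hs := @sum_abs_bound R N A (v u) M k A01 hMu; rewrite -/s in hs.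
  have F3 : - s <= N%:R * M by apply: le_trans (ler_norm _) _; rewrite normrN.
  set z := 1 - v u k in zk mk *.
  have -> : z * - (- v u k + tau * z * s) =
     (z - z ^+ 2) + tau * (z ^+ 2 * (- s)) by rewrite /z; ring.
  rewrite -[X in _ <= X]add0r; apply: lerD.
    by rewrite subr_le0; nra.
  have -> : tau * N%:R * M * z ^+ 2 = tau * (z ^+ 2 * (N%:R * M)) by ring.
  by apply: ler_wpM2l => //; apply: ler_wpM2l => //; exact: sqr_ge0.
- by rewrite t0 /= lerDl ler01.
Qed.
Lemma sol_compare (R : realType) (N : nat) (A : 'M[R]_N) (tau : R) (v w : R -> 'I_N -> R) :
  simple_adjacency A -> 0 <= tau -> nimfa_solution A tau v -> nimfa_solution A tau w ->
  (forall i, 0 <= v 0 i) -> (forall i, 0 <= w 0 i <= 1) -> (forall i, v 0 i <= w 0 i) ->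
  forall t : R, 0 <= t -> forall i, v t i <= w t i.
Proof.
move=> Aadj tau0 vs ws v0 w01 vw0 t t0.
have vge := @sol_nonneg R N A tau v Aadj tau0 vs v0.
have wge := @sol_nonneg R N A tau w Aadj tau0 ws (fun i => proj1 (andP (w01 i))).
have wle := @sol_le1 R N A tau w Aadj tau0 ws (fun i => proj2 (andP (w01 i))).
case: Aadj => Asym Adiag A01.
case: vs => vc vd; case: ws => wc wd.
have dc : forall i, (fun s => w s i - v s i) y @[y --> (0:R)^'+] --> w 0 i - v 0 i.
  by move=> i; apply: cvgB.
have dd : forall i (s : R), 0 < s -> is_derive s 1 (fun u => w u i - v u i)
    ((- w s i + tau * (1 - w s i) * \sum_(j < N) A i j * w s j) -
     (- v s i + tau * (1 - v s i) * \sum_(j < N) A i j * v s j)).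
  by move=> i s s0; exact: is_deriveB (wd i s s0) (vd i s s0).
move=> i; rewrite -subr_ge0.
apply: (@nonneg_inv R N (fun s i => w s i - v s i) _ (tau * N%:R) (t + 1) dc dd) => //.
- by move=> j; rewrite subr_ge0.
- move=> u /andP[u0 uT].
  have u0' : 0 <= u := ltW u0.
  set m := fun j => mneg (w u j - v u j).
  have step1 : forall k, m k * ((- w u k + tau * (1 - w u k) * \sum_(j < N) A k j * w u j) -
     (- v u k + tau * (1 - v u k) * \sum_(j < N) A k j * v u j))
     <= tau * \sum_j A k j * (m k * m j).
    move=> k; have [dk|dk] := ltP (w u k - v u k) 0; last first.
      have mk : m k = 0 by rewrite /m /mneg (ltNge (w u k - v u k) 0) dk.
      rewrite mk mul0r big1 ?mulr0 // => j _; by rewrite mul0r mulr0.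
    have mk : m k = w u k - v u k by rewrite /m /mneg dk.
    rewrite mk.
    set sv := \sum_(j < N) A k j * v u j.
    set sw := \sum_(j < N) A k j * w u j.
    set d := w u k - v u k in dk mk *.
    have svge : 0 <= sv.
      apply: sumr_ge0 => j _; apply: mulr_ge0; last exact: vge.
      by case: (A01 k j) => ->.
    have F1 : d * (sw - sv) <= \sum_j A k j * (d * m j).
      rewrite /sw /sv -sumrB mulr_sumr; apply: ler_sum => j _.
      rewrite -mulrBr mulrCA; apply: ler_wpM2l; first by case: (A01 k j) => ->.
      by rewrite ler_wnM2l ?mneg_le // ltW.
    have F2 : 0 <= \sum_j A k j * (d * m j).
      apply: sumr_ge0 => j _; apply: mulr_ge0; first by case: (A01 k j) => ->.
      by rewrite mulr_le0 ?mneg_le0 // ltW.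
    have -> : d * (- w u k + tau * (1 - w u k) * sw - (- v u k + tau * (1 - v u k) * sv)) =
       - d ^+ 2 - tau * (d ^+ 2 * sv) + tau * ((1 - w u k) * (d * (sw - sv))).
      by rewrite /d; ring.
    rewrite -[X in _ <= X]add0r; apply: lerD.
      rewrite -opprD oppr_le0 addr_ge0 ?sqr_ge0 // mulr_ge0 //.
      by rewrite mulr_ge0 // sqr_ge0.
    apply: ler_wpM2l => //.
    have w1 : 0 <= 1 - w u k <= 1.
      by rewrite subr_ge0 wle //= lerBlDr lerDl wge.
    case/andP: w1 => w1a w1b.
    apply: le_trans (_ : (1 - w u k) * \sum_j A k j * (d * m j) <= _).
      exact: ler_wpM2l.
    by rewrite ler_piMl.
  apply: le_trans (ler_sum _ (fun k _ => step1 k)) _.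
  rewrite -mulr_sumr -mulrA; apply: ler_wpM2l => //.
  by apply: dsum_bound => k j; exact: amgm01.
- by rewrite t0 /= lerDl ler01.
Qed.
Section Spectral.
Local Open Scope sesquilinear_scope.
Local Open Scope complex_scope.
Lemma rayleigh (R : realType) (N : nat) (A : 'M[R]_N) (lam : R) :
  (forall i j, A i j = A j i) -> largest_eigenvalue A lam ->
  forall x : 'I_N -> R,
  \sum_i x i * (\sum_j A i j * x j) <= lam * \sum_i x i ^+ 2.
Proof.
move=> sym [_ Hlam] x.
pose B := map_mx (real_complex R) A.
have Bh : B \is hermsymmx.
  apply: realsym_hermsym.
    by apply/is_hermitianmxP; rewrite expr0 scale1r; apply/matrixP => i j; rewrite !mxE /= sym.
  by apply/mxOverP => i j; rewrite mxE; apply/complex_realP; eexists.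
have /orthomx_spectralP eqB := hermitian_normalmx Bh.
set P := spectralmx B in eqB; set D := spectral_diag B in eqB.
have PU : P \is unitarymx := spectral_unitarymx B.
have iP : invmx P = P^t* := invmx_unitary PU.
have PPt : P *m P^t* = 1%:M by apply/unitarymxP.
have PtP : P^t* *m P = 1%:M by rewrite -iP mulVmx // spectral_unit.
have Dreal := hermitian_spectral_diag_real Bh.
have Dle : forall k, D 0 k <= lam%:C.
  move=> k; have Dk : D 0 k \is Num.real by exact: (mxOverP Dreal).
  rewrite -(RRe_real Dk) lecR; apply: Hlam.
  rewrite eigenvalue_root_char -(fmorph_root (real_complex R)) map_char_poly.
  rewrite -eigenvalue_root_char [X in eigenvalue _ X](RRe_real Dk) -/B; apply/eigenvalueP.
  exists (row k P).
    rewrite eqB iP !mulmxA -!row_mul PPt mul1mx row_mul row_diag_mx -scalemxAl -rowE.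
    done.
  apply/negP => /eqP Pk0.
  have : row k (P *m P^t*) = 0 by rewrite row_mul Pk0 mul0mx.
  rewrite PPt => /rowP /(_ k); rewrite !mxE eqxx /= => /eqP; by rewrite oner_eq0.
pose xc : 'rV[R[i]]_N := \row_i (x i)%:C.
pose y := xc *m P^t*.
pose d : 'rV_N := \row_k (lam%:C - D 0 k).
have S0 : 0 <= (y *m diag_mx d *m y^t*) 0 0.
  rewrite mxE; apply: sumr_ge0 => j _; rewrite mul_mx_diag !mxE mulrAC.
  by apply: mulr_ge0; [exact: mul_conjC_ge0 | rewrite subr_ge0 Dle].
have E1 : diag_mx d = lam%:C%:M - diag_mx D.
  by apply/matrixP => i j; rewrite !mxE mulrnBl.
have Ey : y^t* = P *m xc^t* by rewrite /y trmx_mul map_mxM trmxCK.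
have E2 : y *m diag_mx d *m y^t* = lam%:C *: (xc *m xc^t*) - xc *m B *m xc^t*.
  rewrite E1 Ey eqB iP /y mulmxBr mulmxBl mul_mx_scalar -!mulmxA.
  by rewrite -scalemxAl !mulmxA -(mulmxA xc) PtP mulmx1.
have E3 : (xc *m xc^t*) 0 0 = (\sum_i x i ^+ 2)%:C.
  rewrite !mxE rmorph_sum; apply: eq_bigr => i _; rewrite !mxE conj_Creal; last by apply/complex_realP; eexists.
  by rewrite rmorphXn.
have E4 : (xc *m B *m xc^t*) 0 0 = (\sum_i x i * \sum_j A i j * x j)%:C.
  rewrite -mulmxA !mxE rmorph_sum; apply: eq_bigr => i _; rewrite !mxE rmorphM rmorph_sum.
  congr (_ * _); apply: eq_bigr => j _; rewrite !mxE conj_Creal ?rmorphM //; by apply/complex_realP; eexists.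
have E5 : (lam%:C *: (xc *m xc^t*) - xc *m B *m xc^t*) 0 0 =
  lam%:C * (xc *m xc^t*) 0 0 - (xc *m B *m xc^t*) 0 0 by rewrite !mxE.
move: S0; rewrite E2 E5 E3 E4 -rmorphM -rmorphB ler0c subr_ge0.
by [].
Qed.
End Spectral.

Lemma prev_bound (R : realType) (N : nat) (A : 'M[R]_N) (tau lam : R) (v : R -> 'I_N -> R) :
  simple_adjacency A -> largest_eigenvalue A lam -> 0 <= tau -> nimfa_solution A tau v ->
  (forall i, 0 <= v 0 i <= 1) -> forall t : R, 0 <= t ->
  prevalence v t <= expR ((tau * lam - 1) * t).
Proof.
move=> Aadj Hlam tau0 vs v01 t t0.
have vge := @sol_nonneg R N A tau v Aadj tau0 vs (fun i => proj1 (andP (v01 i))).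
case: (Aadj) => Asym Adiag A01.
case: (vs) => vc vd.
pose E s := \sum_i v s i * v s i.
pose dE s := \sum_i (v s i *: (- v s i + tau * (1 - v s i) * \sum_(j < N) A i j * v s j) +
                     v s i *: (- v s i + tau * (1 - v s i) * \sum_(j < N) A i j * v s j)).
have Ed : forall s : R, 0 < s -> is_derive s 1 E (dE s).
  move=> s s0.
  have -> : E = \sum_i ((fun s => v s i) * (fun s => v s i)).
    by apply/funext => u; rewrite /E fct_sumE.
  apply: is_derive_sum => i.
  exact: is_deriveM (vd i s s0) (vd i s s0).
have Ec : E y @[y --> (0:R)^'+] --> E 0.
  apply: cvg_big => // [|i _]; first exact: add_continuous.
  exact: cvgM.
have Eb : forall s : R, 0 <= s <= t + 1 -> E s <= E 0 * expR (2 * (tau * lam - 1) * s).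
  apply: gronwall Ec Ed _ => u /andP[u0 uT].
  have vu := vge u (ltW u0).
  rewrite /dE /E.
  have key : \sum_i v u i * (- v u i + tau * (1 - v u i) * \sum_(j < N) A i j * v u j)
       <= (tau * lam - 1) * \sum_i v u i * v u i.
    apply: le_trans (_ : \sum_i (- (v u i * v u i) + tau * (v u i * \sum_(j < N) A i j * v u j)) <= _).
      apply: ler_sum => i _.
      set s := \sum_(j < N) A i j * v u j.
      have sge : 0 <= s.
        by apply: sumr_ge0 => j _; apply: mulr_ge0; [case: (A01 i j) => -> | exact: vu].
      have -> : v u i * (- v u i + tau * (1 - v u i) * s) =
        - (v u i * v u i) + tau * (v u i * s) - tau * (v u i * v u i * s) by ring.
      rewrite lerBlDr lerDl; apply: mulr_ge0 => //; apply: mulr_ge0 => //.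
      by apply: mulr_ge0; exact: vu.
    rewrite big_split /= sumrN -mulr_sumr.
    have R1 := @rayleigh R N A lam Asym Hlam (v u).
    have -> : \sum_i v u i * v u i = \sum_i v u i ^+ 2 by apply: eq_bigr => i _; rewrite expr2.
    have : tau * \sum_i v u i * \sum_j A i j * v u j <= tau * (lam * \sum_i v u i ^+ 2).
      exact: ler_wpM2l.
    set Q := \sum_i v u i ^+ 2; move=> h.
    have -> : (tau * lam - 1) * Q = - Q + tau * (lam * Q) by ring.
    by apply: lerD.
  have -> : \sum_i (v u i *: (- v u i + tau * (1 - v u i) * \sum_(j < N) A i j * v u j) +
     v u i *: (- v u i + tau * (1 - v u i) * \sum_(j < N) A i j * v u j)) =
     2 * \sum_i v u i * (- v u i + tau * (1 - v u i) * \sum_(j < N) A i j * v u j).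
    rewrite mulr_sumr; apply: eq_bigr => i _; rewrite /GRing.scale /=; ring.
  rewrite -mulrA; apply: ler_wpM2l => //.
have E0 : E 0 <= N%:R.
  apply: (@le_trans _ _ (\sum_(i < N) (1:R))); last by rewrite sumr_const card_ord.
  apply: ler_sum => i _; case/andP: (v01 i) => a b; exact: mulr_ile1.
have Et : E t <= N%:R * expR (2 * (tau * lam - 1) * t).
  apply: le_trans (Eb t _) _; first by rewrite t0 /= lerDl ler01.
  by apply: ler_wpM2r => //; exact: ltW (expR_gt0 _).
rewrite /prevalence.
have [N0|Npos] := eqVneq N 0%N.
  have -> : (N%:R : R) = 0 by rewrite N0.
  by rewrite invr0 mulr0; exact: ltW (expR_gt0 _).
have Nr : (0 : R) < N%:R by rewrite ltr0n lt0n.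
have pge : 0 <= (\sum_i v t i) / N%:R.
  by apply: divr_ge0; [apply: sumr_ge0 => i _; exact: vge | exact: ltW].
rewrite -ler_sqr ?nnegrE ?(ltW (expR_gt0 _)) //.
have -> : expR ((tau * lam - 1) * t) ^+ 2 = expR (2 * (tau * lam - 1) * t).
  by rewrite expr2 -expRD; congr expR; ring.
rewrite expr_div_n ler_pdivrMr ?exprn_gt0 //.
apply: le_trans (@cauchy_schwarz R N (v t)) _.
have -> : \sum_i v t i ^+ 2 = E t by apply: eq_bigr => i _; rewrite expr2.
have -> : expR (2 * (tau * lam - 1) * t) * N%:R ^+ 2 =
   N%:R * (N%:R * expR (2 * (tau * lam - 1) * t)) by ring.
by apply: ler_wpM2l => //; exact: ltW.
Qed.

Theorem lemma2 (R : realType) (N : nat) (A : 'M[R]_N) (tau lam : R) :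
  simple_adjacency A ->
  largest_eigenvalue A lam ->
  0 < tau -> tau * lam < 1 ->
  (forall (v w : R -> 'I_N -> R),
     nimfa_solution A tau v -> nimfa_solution A tau w ->
     (forall i, 0 <= v 0 i <= 1) -> (forall i, w 0 i = 1) ->
     forall t, 0 <= t ->
       prevalence v t <= prevalence w t /\
       prevalence w t <= expR ((tau * lam - 1) * t)) /\
  (forall r : R, 0 < r < 1 ->
     exists T : R,
       0 <= T <= (1 - tau * lam)^-1 * ln (r^-1) /\
       (forall v : R -> 'I_N -> R,
          nimfa_solution A tau v -> (forall i, r <= v 0 i <= 1) ->
          `|prevalence v T - 0| <= r)).
Proof.
move=> Aadj Hlam tau0 R0lt.
have tau0' : 0 <= tau := ltW tau0.
split.
  move=> v w vs ws v01 w1 t t0.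
  have w01 : forall i, 0 <= w 0 i <= 1 by move=> i; rewrite w1 ler01 lexx.
  split; last exact: (@prev_bound R N A tau lam w Aadj Hlam tau0' ws w01 t t0).
  rewrite /prevalence; apply: ler_wpM2r; first by rewrite invr_ge0 ler0n.
  apply: ler_sum => i _.
  apply: (@sol_compare R N A tau v w Aadj tau0' vs ws _ w01 _ t t0).
    by move=> j; case/andP: (v01 j).
  by move=> j; rewrite w1; case/andP: (v01 j).
move=> r /andP[r0 r1].
have L0 : 0 < ln r^-1 by apply: ln_gt0; rewrite invf_gt1.
have d0 : 0 < 1 - tau * lam by rewrite subr_gt0.
exists ((1 - tau * lam)^-1 * ln r^-1); split.
  by rewrite lexx andbT mulr_ge0 // ?invr_ge0 ltW.
move=> v vs vr.
have v01 : forall i, 0 <= v 0 i <= 1.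
  by move=> i; case/andP: (vr i) => a b; rewrite b andbT (le_trans (ltW r0)).
have T0 : 0 <= (1 - tau * lam)^-1 * ln r^-1 by rewrite mulr_ge0 // ?invr_ge0 ltW.
have p := @prev_bound R N A tau lam v Aadj Hlam tau0' vs v01 _ T0.
have vge := @sol_nonneg R N A tau v Aadj tau0' vs (fun i => proj1 (andP (v01 i))).
rewrite subr0 ger0_norm; last first.
  rewrite /prevalence divr_ge0 ?ler0n //; apply: sumr_ge0 => i _; exact: vge.
apply: le_trans p _.
have -> : (tau * lam - 1) * ((1 - tau * lam)^-1 * ln r^-1) = - ln r^-1.
  field; by rewrite lt0r_neq0.
rewrite expRN lnK ?invrK //.
by rewrite posrE invr_gt0.
Qed.
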